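(* Let $\zeta: \mathrm{TVB}_2 \to \mathrm{GL}_3(\mathbb{C})$ be a complex homogeneous local representation of $\mathrm{TVB}_2$. Then $\zeta$ is equivalent to one of the following eight representations (for a $2\times 2$ matrix $M$ write $M\oplus 1=\begin{pmatrix} M & 0\\ 0 & 1\end{pmatrix}$ and $1\oplus M=\begin{pmatrix} 1 & 0\\ 0 & M\end{pmatrix}$): \begin{itemize} \item[(1)] $\zeta_1(\sigma_1)=\begin{pmatrix} d & b\\ b/x^2 & d\end{pmatrix}\oplus 1$, $\zeta_1(\rho_1)=\begin{pmatrix} 0 & x\\ 1/x & 0\end{pmatrix}\oplus 1$, $\zeta_1(\gamma_1)=\mathrm{diag}(-1,1,1)$, $\zeta_1(\gamma_2)=\mathrm{diag}(1,-1,1)$, where $b,d,x\in\mathbb{C}$, $b^2-d^2x^2\neq 0$, $x\neq 0$. \item[(2)] $\zeta_2(\sigma_1)=\begin{pmatrix} \frac{2bw+dx}{x} & b\\ \frac{b-bw^2}{x^2} & d\end{pmatrix}\oplus 1$, $\zeta_2(\rho_1)=\begin{pmatrix} w & x\\ \frac{1-w^2}{x} & -w\end{pmatrix}\oplus 1$, $\zeta_2(\gamma_1)=\zeta_2(\gamma_2)=I_3$, where $b,d,w,x\in\mathbb{C}$, $x\neq 0$, $dx+bw\neq b$ and $dx+bw\neq -b$. \item[(3)] $\zeta_3(\sigma_1)=\begin{pmatrix} a & b\\ c & d\end{pmatrix}\oplus 1$, $\zeta_3(\rho_1)=\mathrm{diag}(-1,-1,1)$, $\zeta_3(\gamma_1)=\zeta_3(\gamma_2)=I_3$,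 where $a,b,c,d\in\mathbb{C}$, $ad-bc\neq 0$. \item[(4)] $\zeta_4(\sigma_1)=\begin{pmatrix} a & b\\ c & d\end{pmatrix}\oplus 1$, $\zeta_4(\rho_1)=I_3$, $\zeta_4(\gamma_1)=\zeta_4(\gamma_2)=I_3$, where $a,b,c,d\in\mathbb{C}$, $ad-bc\neq 0$. \item[(5)] $\zeta_5(\sigma_1)=\begin{pmatrix} a & 0\\ c & d\end{pmatrix}\oplus 1$, $\zeta_5(\rho_1)=\begin{pmatrix} -1 & 0\\ \frac{2c}{d-a} & 1\end{pmatrix}\oplus 1$, $\zeta_5(\gamma_1)=\zeta_5(\gamma_2)=I_3$, where $a,c,d\in\mathbb{C}$, $ad\neq 0$, $a\neq d$. \item[(6)] $\zeta_6(\sigma_1)=\begin{pmatrix} a & 0\\ c & d\end{pmatrix}\oplus 1$, $\zeta_6(\rho_1)=\begin{pmatrix} 1 & 0\\ \frac{2c}{a-d} & -1\end{pmatrix}\oplus 1$, $\zeta_6(\gamma_1)=\zeta_6(\gamma_2)=I_3$, where $a,c,d\in\mathbb{C}$, $ad\neq 0$, $a\neq d$. \item[(7)] $\zeta_7(\sigma_1)=\mathrm{diag}(d,d,1)$, $\zeta_7(\rho_1)=\begin{pmatrix} 1 & 0\\ y & -1\end{pmatrix}\oplus 1$, $\zeta_7(\gamma_1)=\zeta_7(\gamma_2)=I_3$, where $d,y\in\mathbb{C}$, $d\neq 0$. \item[(8)] $\zeta_8(\sigma_1)=\mathrm{diag}(d,d,1)$, $\zeta_8(\rho_1)=\begin{pmatrix}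 -1 & 0\\ y & 1\end{pmatrix}\oplus 1$, $\zeta_8(\gamma_1)=\zeta_8(\gamma_2)=I_3$, where $d,y\in\mathbb{C}$, $d\neq 0$. \end{itemize}
   Context: The twisted virtual braid group $\mathrm{TVB}_2$ is the group with generators $\sigma_1,\rho_1,\gamma_1,\gamma_2$ and defining relations $\rho_1^2=1$, $\gamma_1^2=\gamma_2^2=1$, $\gamma_1\gamma_2=\gamma_2\gamma_1$, $\rho_1\gamma_1=\gamma_2\rho_1$, $\rho_1\sigma_1\rho_1=\gamma_2\gamma_1\sigma_1\gamma_1\gamma_2$. A complex local representation $\zeta:\mathrm{TVB}_2\to \mathrm{GL}_3(\mathbb{C})$ is a group homomorphism of the form $\zeta(\sigma_1)=S\oplus 1$, $\zeta(\rho_1)=R\oplus 1$, $\zeta(\gamma_1)=G_1\oplus 1$, $\zeta(\gamma_2)=1\oplus G_2$ with $S,R,G_1,G_2\in \mathrm{GL}_2(\mathbb{C})$, where $M\oplus 1$ is the block-diagonal matrix with blocks $M$ and $1$ and $1\oplus M$ the block-diagonal matrix with blocks $1$ and $M$. It is homogeneous if $G_1=G_2$. Two representations are equivalent if they are conjugate by a fixed invertible matrix. *)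

(* Defs.v *)
(* complex numbers C = R[i] over an arbitrary realType R
   (any two realTypes are isomorphic, so R[i] is the field of complex numbers). *)
From HB Require Import structures.
From mathcomp Require Import all_boot all_order all_algebra.
From mathcomp Require Import complex.
From mathcomp Require Import reals.
Set Implicit Arguments. Unset Strict Implicit. Unset Printing Implicit Defensive.
Import Order.TTheory GRing.Theory Num.Theory.
Local Open Scope ring_scope.

Inductive gen := sig1 | rho1 | gam1 | gam2.

Section Defs.
Variable C : fieldType.

Definition mx2 (a b c d : C) : 'M[C]_2 :=
  \matrix_(i < 2, j < 2)
    if (i == 0 :> nat) then (if (j == 0 :> nat) then a else b)
    else (if (j == 0 :> nat) then c else d).

Definition dsumr (M : 'M[C]_2) : 'M[C]_3 := block_mx M 0 0 (1%:M : 'M[C]_1).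
Definition dsuml (M : 'M[C]_2) : 'M[C]_3 := block_mx (1%:M : 'M[C]_1) 0 0 M.

(* A map from the generators to GL_3(C) extends to a group homomorphism
   TVB_2 -> GL_3(C) iff the images are invertible and satisfy the defining
   relations of TVB_2. *)
Definition is_TVB2_rep (z : gen -> 'M[C]_3) : Prop :=
  (forall g, z g \in unitmx) /\
  [/\ z rho1 *m z rho1 = 1%:M,
      (z gam1 *m z gam1 = 1%:M /\ z gam2 *m z gam2 = 1%:M),
      z gam1 *m z gam2 = z gam2 *m z gam1,
      z rho1 *m z gam1 = z gam2 *m z rho1 &
      z rho1 *m z sig1 *m z rho1
        = z gam2 *m z gam1 *m z sig1 *m z gam1 *m z gam2].

Definition is_local (z : gen -> 'M[C]_3) : Prop :=
  exists S R G1 G2 : 'M[C]_2,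
    [/\ S \in unitmx, R \in unitmx, G1 \in unitmx & G2 \in unitmx] /\
    [/\ z sig1 = dsumr S, z rho1 = dsumr R, z gam1 = dsumr G1 & z gam2 = dsuml G2].

Definition is_homogeneous_local (z : gen -> 'M[C]_3) : Prop :=
  exists S R G : 'M[C]_2,
    [/\ S \in unitmx, R \in unitmx & G \in unitmx] /\
    [/\ z sig1 = dsumr S, z rho1 = dsumr R, z gam1 = dsumr G & z gam2 = dsuml G].

Definition rep_equiv (z z' : gen -> 'M[C]_3) : Prop :=
  exists P : 'M[C]_3, P \in unitmx /\ forall g, z' g = invmx P *m z g *m P.

Definition mkrep (s r g1 g2 : 'M[C]_3) : gen -> 'M[C]_3 :=
  fun g => match g with sig1 => s | rho1 => r | gam1 => g1 | gam2 => g2 end.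

Definition zeta1 (b d x : C) :=
  mkrep (dsumr (mx2 d b (b / x ^+ 2) d)) (dsumr (mx2 0 x (x^-1) 0))
        (dsumr (mx2 (-1) 0 0 1)) (dsumr (mx2 1 0 0 (-1))).
Definition zeta2 (b d w x : C) :=
  mkrep (dsumr (mx2 ((2 * b * w + d * x) / x) b ((b - b * w ^+ 2) / x ^+ 2) d))
        (dsumr (mx2 w x ((1 - w ^+ 2) / x) (- w))) 1%:M 1%:M.
Definition zeta3 (a b c d : C) :=
  mkrep (dsumr (mx2 a b c d)) (dsumr (mx2 (-1) 0 0 (-1))) 1%:M 1%:M.
Definition zeta4 (a b c d : C) :=
  mkrep (dsumr (mx2 a b c d)) 1%:M 1%:M 1%:M.
Definition zeta5 (a c d : C) :=
  mkrep (dsumr (mx2 a 0 c d)) (dsumr (mx2 (-1) 0 (2 * c / (d - a)) 1)) 1%:M 1%:M.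
Definition zeta6 (a c d : C) :=
  mkrep (dsumr (mx2 a 0 c d)) (dsumr (mx2 1 0 (2 * c / (a - d)) (-1))) 1%:M 1%:M.
Definition zeta7 (d y : C) :=
  mkrep (dsumr (mx2 d 0 0 d)) (dsumr (mx2 1 0 y (-1))) 1%:M 1%:M.
Definition zeta8 (d y : C) :=
  mkrep (dsumr (mx2 d 0 0 d)) (dsumr (mx2 (-1) 0 y 1)) 1%:M 1%:M.

End Defs.

(* Main.v *)
Require Import Defs.
From HB Require Import structures.
From mathcomp Require Import all_boot all_order all_algebra.
From mathcomp Require Import complex.
From mathcomp Require Import reals.
From mathcomp Require Import ring.
Import Order.TTheory GRing.Theory Num.Theory.
Local Open Scope ring_scope.

Module Helpers.
Set Implicit Arguments. Unset Strict Implicit.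
Section S.
Variable C : fieldType.
Definition mx3 (a b c d e f g h k : C) : 'M[C]_3 :=
  \matrix_(i < 3, j < 3) nth 0 (nth [::] [:: [:: a; b; c]; [:: d; e; f]; [:: g; h; k]] i) j.


Lemma dsumr_mx2 (a b c d : C) : dsumr (mx2 a b c d) = mx3 a b 0 c d 0 0 0 1.
Proof. rewrite /dsumr /mx2 /mx3; apply/matrixP => i j;
  case: i => [[|[|[|i]]] Hi] //; case: j => [[|[|[|j]]] Hj] //;
  do ![rewrite !mxE /= | rewrite /split; case: ltnP => // ? ]; by rewrite ?mxE. Qed.
Lemma dsuml_mx2 (a b c d : C) : dsuml (mx2 a b c d) = mx3 1 0 0 0 a b 0 c d.
Proof. rewrite /dsuml /mx2 /mx3; apply/matrixP => i j;
  case: i => [[|[|[|i]]] Hi] //; case: j => [[|[|[|j]]] Hj] //;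
  do ![rewrite !mxE /= | rewrite /split; case: ltnP => // ? ]; by rewrite ?mxE. Qed.
Lemma one3 : 1%:M = mx3 1 0 0 0 1 0 0 0 1.
Proof. rewrite /mx3; apply/matrixP => i j;
  case: i => [[|[|[|i]]] Hi] //; case: j => [[|[|[|j]]] Hj] //;
  do ![rewrite !mxE /= | rewrite /split; case: ltnP => // ? ]; by rewrite ?mxE. Qed.
Lemma mx2_eta (M : 'M[C]_2) : exists a b c d, M = mx2 a b c d.
Proof.
exists (M 0 0), (M 0 1), (M 1 0), (M 1 1); apply/matrixP => i j; rewrite /mx2 mxE.
by case: i => [[|[|i]] Hi] //; case: j => [[|[|j]] Hj] //=; congr (M _ _); apply: val_inj.
Qed.
Lemma mx3_mul a b c d e f g h k a' b' c' d' e' f' g' h' k' :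
  mx3 a b c d e f g h k *m mx3 a' b' c' d' e' f' g' h' k' =
  mx3 (a*a' + b*d' + c*g') (a*b' + b*e' + c*h') (a*c' + b*f' + c*k')
      (d*a' + e*d' + f*g') (d*b' + e*e' + f*h') (d*c' + e*f' + f*k')
      (g*a' + h*d' + k*g') (g*b' + h*e' + k*h') (g*c' + h*f' + k*k').
Proof.
apply/matrixP => i j; rewrite !mxE !big_ord_recr big_ord0 /= !mxE /= add0r.
by case: i => [[|[|[|i]]] Hi] //; case: j => [[|[|[|j]]] Hj].
Qed.
Lemma mx2_mul (a b c d a' b' c' d' : C) :
  mx2 a b c d *m mx2 a' b' c' d' =
  mx2 (a*a' + b*c') (a*b' + b*d') (c*a' + d*c') (c*b' + d*d').
Proof.
apply/matrixP => i j; rewrite !mxE !big_ord_recr big_ord0 /= !mxE /= add0r.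
by case: i => [[|[|i]] Hi] //; case: j => [[|[|j]] Hj].
Qed.
Lemma mx3_eq a b c d e f g h k a' b' c' d' e' f' g' h' k' :
  mx3 a b c d e f g h k = mx3 a' b' c' d' e' f' g' h' k' ->
  [/\ a = a', b = b', c = c', d = d' & [/\ e = e', f = f', g = g', h = h' & k = k']].
Proof.
move/matrixP => H.
move: (H 0 0) (H 0 1) (H 0 2) (H 1 0) (H 1 1) (H 1 2) (H 2 0) (H 2 1) (H 2 2).
by rewrite !mxE /=.
Qed.
Lemma mx2_eq (a b c d a' b' c' d' : C) :
  mx2 a b c d = mx2 a' b' c' d' -> [/\ a = a', b = b', c = c' & d = d'].
Proof.
move/matrixP => H.
move: (H 0 0) (H 0 1) (H 1 0) (H 1 1).
by rewrite !mxE /=.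
Qed.
Lemma unit2 (a b c d : C) : mx2 a b c d \in unitmx -> a * d - b * c != 0.
Proof.
move=> U; have := mulmxV U.
have [a' [b' [c' [d' ->]]]] := mx2_eta (invmx (mx2 a b c d)).
have -> : (1%:M : 'M[C]_2) = mx2 1 0 0 1.
  apply/matrixP => i j; rewrite !mxE.
  by case: i => [[|[|i]] Hi] //; case: j => [[|[|j]] Hj].
rewrite mx2_mul => /mx2_eq [e1 e2 e3 e4].
apply/eqP => D.
have : (a*d - b*c) * (a'*d' - b'*c') = (a*a' + b*c') * (c*b' + d*d') - (a*b' + b*d') * (c*a' + d*c') by ring.
rewrite D e1 e2 e3 e4 mul0r mulr0 subr0 mulr1 => /eqP; rewrite eq_sym oner_eq0.
done.
Qed.
End S.
End Helpers.
Import Helpers.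

Lemma equiv_id (C : fieldType) (z z' : gen -> 'M[C]_3) :
  (forall g, z' g = z g) -> rep_equiv z z'.
Proof.
move=> H; exists 1%:M; split; first exact: unitmx1.
by move=> g; rewrite invmx1 mul1mx mulmx1 H.
Qed.

Lemma two_eq0 (R : realType) (b : R[i]) : b = - b -> b = 0.
Proof.
move=> h; apply/eqP; have : b *+ 2 == 0 by rewrite mulr2n {1}h addNr.
by rewrite mulrn_eq0.
Qed.

Lemma two_neq0 (R : realType) : (2 : R[i]) != 0.
Proof. by rewrite pnatr_eq0. Qed.

Lemma sq1 (C : fieldType) (w : C) : w * w = 1 -> w = 1 \/ w = -1.
Proof.
move=> h; have : (w-1)*(w+1) = w*w - 1 by ring.
rewrite h subrr => /eqP; rewrite mulf_eq0 subr_eq0 addr_eq0 => /orP [/eqP->|/eqP->]; by [left|right].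
Qed.

Lemma solve_lin (C : fieldType) (x L Rr k p q : C) :
  x != 0 -> L = Rr -> x * (p - q) = k * (L - Rr) -> p = q.
Proof.
move=> x0 ->; rewrite subrr mulr0 => /eqP; rewrite mulf_eq0 (negbTE x0) subr_eq0.
by move/eqP.
Qed.

Theorem theorem3p1 (R : realType) (z : gen -> 'M[R[i]]_3) :
  is_TVB2_rep z -> is_homogeneous_local z ->
  (exists b d x : R[i],
      [/\ b ^+ 2 - d ^+ 2 * x ^+ 2 != 0, x != 0 & rep_equiv z (zeta1 b d x)]) \/
  (exists b d w x : R[i],
      [/\ x != 0, d * x + b * w != b, d * x + b * w != - b
        & rep_equiv z (zeta2 b d w x)]) \/
  (exists a b c d : R[i], a * d - b * c != 0 /\ rep_equiv z (zeta3 a b c d)) \/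
  (exists a b c d : R[i], a * d - b * c != 0 /\ rep_equiv z (zeta4 a b c d)) \/
  (exists a c d : R[i], [/\ a * d != 0, a != d & rep_equiv z (zeta5 a c d)]) \/
  (exists a c d : R[i], [/\ a * d != 0, a != d & rep_equiv z (zeta6 a c d)]) \/
  (exists d y : R[i], d != 0 /\ rep_equiv z (zeta7 d y)) \/
  (exists d y : R[i], d != 0 /\ rep_equiv z (zeta8 d y)).
Proof.
move=> [_ [HR2 [HG1 _] _ HRG HS]] [S [Rm [G [[uS _ _] [zs zr zg1 zg2]]]]].
have [a [b [c [d eS]]]] := mx2_eta S.
have [w [x [v [u eR]]]] := mx2_eta Rm.
have [g [g12 [g21 [g22 eG]]]] := mx2_eta G.
subst S Rm G.
have dS := unit2 uS.
rewrite zs zr zg1 zg2 !dsumr_mx2 !dsuml_mx2 in HR2 HG1 HRG HS.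
have HR2c := HR2.
move: HR2 HG1 HRG.
rewrite one3 !mx3_mul !(mul0r, mulr0, addr0, add0r, mul1r, mulr1).
move=> /mx3_eq [r1 r2 _ r4 [r5 _ _ _ _]].
move=> /mx3_eq [gg _ _ _ [_ _ _ _ _]].
move=> /mx3_eq [h1 h2 _ h4 [h5 h6 h7 h8 h9]].
subst g12 g22.
have g21z : g21 = 0.
  have -> : g21 = (g21*v)*x + (g21*u)*u by rewrite -!mulrA -mulrDr r5 mulr1.
  by rewrite -h7 -h8 !mul0r addr0.
subst g21.
move: gg h1 h5; rewrite !(mul0r, mulr0, addr0, add0r, mul1r, mulr1) => gg h1 h5.
have : (g-1)*(g+1) = g*g - 1 by ring.
rewrite gg subrr => /eqP; rewrite mulf_eq0 subr_eq0 addr_eq0 => /orP [/eqP eg|/eqP eg]; subst g.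
  rewrite -one3 !mul1mx !mulmx1 in HS.
  set R3 := mx3 w x 0 v u 0 0 0 1 in HS HR2c.
  set S3 := mx3 a b 0 c d 0 0 0 1 in HS.
  have HC : R3 *m S3 = S3 *m R3 by rewrite -[in RHS]HS -!mulmxA HR2c mulmx1.
  have zg : dsumr (mx2 1 0 0 1) = 1%:M :> 'M[R[i]]_3 by rewrite dsumr_mx2 one3.
  have zg' : dsuml (mx2 1 0 0 1) = 1%:M :> 'M[R[i]]_3 by rewrite dsuml_mx2 one3.
  rewrite {}zg in zg1; rewrite {}zg' in zg2.
  move: HC; rewrite /R3 /S3 !mx3_mul !(mul0r, mulr0, addr0, add0r, mul1r, mulr1).
  move=> /mx3_eq [c1 c2 _ c4 [c5 _ _ _ _]].
  clear HS HR2c R3 S3 h1 h2 h4 h5 h7 h8 gg uS.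
  have [x0|xn0] := eqVneq x 0.
    subst x.
    move: r1 r4 r5 c1 c2 c4; rewrite !(mul0r, mulr0, addr0, add0r) => r1 r4 r5 c1 c2 c4.
    have [ew|ew] := sq1 _ _ r1; have [eu|eu] := sq1 _ _ r5; subst w u;
      move: r4 c2 c4 {r1 r5 c1 c5}; rewrite !(mul0r, mulr0, addr0, add0r, mul1r, mulr1, mulN1r, mulrN1) => r4 c2 c4.
    +
      have v0 : v = 0 by apply: two_eq0; apply/eqP; rewrite -addr_eq0 r4.
      subst v.
      do 3 right; left; exists a, b, c, d; split => //.
      apply: equiv_id; case => /=.
      * by rewrite zs.
      * by rewrite zr dsumr_mx2 one3.
      * by rewrite zg1.
      * by rewrite zg2.
    + have b0 : b = 0 by apply: two_eq0.
      subst b; rewrite mul0r subr0 in dS.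
      have [ead|nad] := eqVneq a d.
        subst a.
        have c0 : c = 0 by apply: (@solve_lin _ 2 _ _ (-1) _ _ (two_neq0 R) c4); ring.
        subst c.
        do 6 right; left; exists d, v; split.
          by move: dS; rewrite mulf_eq0 negb_or => /andP[].
        apply: equiv_id; case => /=.
        * by rewrite zs.
        * by rewrite zr.
        * by rewrite zg1.
        * by rewrite zg2.
      have nad' : a - d != 0 by rewrite subr_eq0.
      have ev : v = 2 * c / (a - d) by apply: (@solve_lin _ (a - d) _ _ 1 _ _ nad' c4); field.
      do 5 right; left; exists a, c, d; split => //.
      apply: equiv_id; case => /=.
      * by rewrite zs.
      * by rewrite zr ev.
      * by rewrite zg1.
      * by rewrite zg2.
    + have b0 : b = 0 by apply: two_eq0; exact: esym c2.
      subst b; rewrite mul0r subr0 in dS.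
      have [ead|nad] := eqVneq a d.
        subst a.
        have c0 : c = 0 by apply: (@solve_lin _ 2 _ _ 1 _ _ (two_neq0 R) c4); ring.
        subst c.
        do 7 right; exists d, v; split.
          by move: dS; rewrite mulf_eq0 negb_or => /andP[].
        apply: equiv_id; case => /=.
        * by rewrite zs.
        * by rewrite zr.
        * by rewrite zg1.
        * by rewrite zg2.
      have nad' : d - a != 0 by rewrite subr_eq0 eq_sym.
      have ev : v = 2 * c / (d - a) by apply: (@solve_lin _ (d - a) _ _ (-1) _ _ nad' c4); field.
      do 4 right; left; exists a, c, d; split => //.
      apply: equiv_id; case => /=.
      * by rewrite zs.
      * by rewrite zr ev.
      * by rewrite zg1.
      * by rewrite zg2.
    + have v0 : v = 0.
        by apply: two_eq0; move: r4; rewrite -opprD => /eqP; rewrite oppr_eq0 addr_eq0 => /eqP.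
      subst v.
      do 2 right; left; exists a, b, c, d; split => //.
      apply: equiv_id; case => /=.
      * by rewrite zs.
      * by rewrite zr.
      * by rewrite zg1.
      * by rewrite zg2.
  have eu : u = - w by apply: (@solve_lin _ _ _ _ (1) _ _ xn0 r2); ring.
  have ev : v = (1 - w ^+ 2) / x by apply: (@solve_lin _ _ _ _ (1) _ _ xn0 r1); field.
  have ea : a = (2 * b * w + d * x) / x by apply: (@solve_lin _ _ _ _ (-1) _ _ xn0 c2); rewrite eu; field.
  have ec : c = (b - b * w ^+ 2) / x ^+ 2 by apply: (@solve_lin _ _ _ _ (1) _ _ xn0 c1); rewrite ev ea; field.
  clear c1 c2 c4 c5 r1 r2 r4 r5.
  subst u v a c.
  right; left; exists b, d, w, x; split => //.
  - apply: contra dS => /eqP E; apply/eqP.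
    set A := (_ * _ - _).
    have -> : A = ((d*x+b*w)^+2 - b^+2)/x^+2 by rewrite /A; field.
    by rewrite E subrr mul0r.
  - apply: contra dS => /eqP E; apply/eqP.
    set A := (_ * _ - _).
    have -> : A = ((d*x+b*w)^+2 - b^+2)/x^+2 by rewrite /A; field.
    by rewrite E sqrrN subrr mul0r.
  - apply: equiv_id; case => /=.
    + by rewrite zs.
    + by rewrite zr.
    + by rewrite zg1.
    + by rewrite zg2.
move: HS; rewrite !mx3_mul !(mul0r, mulr0, addr0, add0r, mul1r, mulr1).
rewrite !(mulN1r, mulrN1, opprK, mulNr, mulrN) in h1 h5 *.
have w0 : w = 0 by apply: two_eq0; rewrite -{1}h1.
have u0 : u = 0 by apply: two_eq0.
subst w u.
move: r1; rewrite !(mul0r, mulr0, addr0, add0r) => r1.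
have x0 : x != 0 by apply/eqP => x0; move: r1; rewrite x0 mul0r => /eqP; rewrite eq_sym oner_eq0.
have ev : v = x^-1 by apply: (mulfI x0); rewrite r1 mulfV.
subst v.
rewrite ?(mul0r, mulr0, addr0, add0r) => /mx3_eq [e1 e2 _ e4 [e5 _ _ _ _]].
have ea : a = d by rewrite -e1; field.
have ec : c = b / x ^+ 2 by rewrite -e4; field.
clear e1 e2 e4 e5; subst a c.
left; exists b, d, x; split => //.
  apply: contra dS => /eqP E; apply/eqP.
  have -> : d * d - b * (b / x ^+ 2) = - (b ^+ 2 - d ^+ 2 * x ^+ 2) / x ^+ 2 by field.
  by rewrite E oppr0 mul0r.
apply: equiv_id; case => /=.
- by rewrite zs.
- by rewrite zr.
- by rewrite zg1.
- by rewrite zg2 dsumr_mx2 dsuml_mx2.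
Qed.
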